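(* Let $\mathcal{L}$ be a lattice, $L\subseteq\mathcal{L}$ finite, and $\ell\in C(L)$. Then for any $\jmath\in\mathcal{L}$, membership $\jmath\in\ell\uparrow C(L)$ can be decided in $O(|L|)$ time.
   Context: A lattice means a partially ordered set $(\mathcal{L},\sqsubseteq)$ with least element $\bot$ in which any two elements have a least upper bound $\sqcup$; $\bigsqcup S$ denotes the least upper bound of a finite set ($\bigsqcup\emptyset=\bot$). The closure set is $C(S)=\{\bigsqcup S' : S'\subseteq S\}$; the up-set is $\ell\uparrow S=\{\jmath\in\mathcal{L} : \ell\sqsubseteq\jmath \text{ and } \forall\iota\in S.\ \iota\sqsubseteq\jmath\Rightarrow\iota\sqsubseteq\ell\}$. Cost model: all lattice operations ($\sqsubseteq$, $\sqcup$) take constant time. *)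

(* Defs.v *)
From mathcomp Require Import all_boot all_order.
Set Implicit Arguments. Unset Strict Implicit. Unset Printing Implicit Defensive.
Import Order.Theory.
Local Open Scope order_scope.

(* A "lattice" in the paper's sense: a poset with least element and binary
   joins, i.e. MathComp's [bJoinSemilatticeType d]. *)

Section LatticeNotions.
Context {disp : Order.disp_t} {T : bJoinSemilatticeType disp}.

Definition closure_set (S : seq T) : T -> Prop :=
  fun x => exists S' : seq T, {subset S' <= S} /\ x = \join_(y <- S') y.

Definition upset (l : T) (S : T -> Prop) : T -> Prop :=
  fun j => l <= j /\ (forall i, S i -> i <= j -> i <= l).

End LatticeNotions.

(* Cost model: a tiny structured imperative language whose primitive
   instructions are lattice operations (join, bottom, comparison) and
   boolean-register operations, each costing one unit.  Programs are fixed
   syntactic objects, uniform over all lattices.                            *)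

Inductive cmd : Type :=
| Skip
| Seq (c1 c2 : cmd)
| SetBot (dst : nat)
| SetJoin (dst a b : nat)
| SetCopy (dst a : nat)
| SetLeq (bdst a b : nat)
| SetB (bdst : nat) (v : bool)
| If (b : nat) (c1 c2 : cmd)
| ForIn (dst : nat) (body : cmd).

Section Semantics.
Context {disp : Order.disp_t} {T : bJoinSemilatticeType disp}.

Record state := State { lreg : nat -> T ; breg : nat -> bool }.

Definition upd {A : Type} (f : nat -> A) (k : nat) (v : A) : nat -> A :=
  fun n => if n == k then v else f n.

(* [exec L c s] = (final state, number of elementary steps). *)
Fixpoint exec (L : seq T) (c : cmd) (s : state) : state * nat :=
  match c with
  | Skip => (s, 0)
  | Seq c1 c2 =>
      let (s1, k1) := exec L c1 s in
      let (s2, k2) := exec L c2 s1 in (s2, k1 + k2)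
  | SetBot d => (State (upd (lreg s) d \bot) (breg s), 1)
  | SetJoin d a b => (State (upd (lreg s) d (lreg s a `|` lreg s b)) (breg s), 1)
  | SetCopy d a => (State (upd (lreg s) d (lreg s a)) (breg s), 1)
  | SetLeq d a b => (State (lreg s) (upd (breg s) d (lreg s a <= lreg s b)), 1)
  | SetB d v => (State (lreg s) (upd (breg s) d v), 1)
  | If b c1 c2 =>
      let (s', k) := if breg s b then exec L c1 s else exec L c2 s in (s', k.+1)
  | ForIn d body =>
      foldl (fun (acc : state * nat) (x : T) =>
               let (s0, k0) := acc in
               let (s1, k1) := exec L body (State (upd (lreg s0) d x) (breg s0)) in
               (s1, k0 + k1.+1))
            (s, 0) L
  end.

(* Initial state on input (l, j): r[0] = l, r[1] = j, all other lattice
   registers \bot, all boolean registers false.  The answer is f[0]. *)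
Definition init_state (l j : T) : state :=
  State (fun n => if n == 0 then l else if n == 1 then j else \bot)
        (fun _ => false).

End Semantics.

(* Main.v *)
Require Import Defs.
From mathcomp Require Import all_boot all_order.
Local Open Scope order_scope.
Import Order.Theory.
From mathcomp Require Import zify.

Definition body : cmd :=
  Seq (SetLeq 1 2 1) (If 1 (Seq (SetLeq 2 2 0) (If 2 Skip (SetB 0 false))) Skip).

Definition prog : cmd := Seq (SetLeq 0 0 1) (ForIn 2 body).

Section Proofs.
Context {disp : Order.disp_t} {T : bJoinSemilatticeType disp}.

Lemma body_spec (L : seq T) (s : state) :
  exists b n, (n <= 5)%N /\ exec L body s = (State (lreg s) b, n) /\
    b 0 = breg s 0 && ((lreg s 2 <= lreg s 1) ==> (lreg s 2 <= lreg s 0)).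
Proof.
case: s => lr br /=.
rewrite /upd /=.
case E1: (lr 2 <= lr 1) => /=.
- case E2: (lr 2 <= lr 0) => /=.
  + by eexists; eexists; split; last split; [| reflexivity |]; rewrite ?andbT.
  + by eexists; eexists; split; last split; [| reflexivity |]; rewrite ?andbF.
- by eexists; eexists; split; last split; [| reflexivity |]; rewrite ?andbT.
Qed.

Definition fstep (L : seq T) := (fun (acc : state * nat) (x : T) =>
               let (s0, k0) := acc in
               let (s1, k1) := exec L body (State (upd (lreg s0) 2 x) (breg s0)) in
               (s1, k0 + k1.+1)).
Arguments fstep : simpl never.

Lemma fold_spec (L : seq T) (l j : T) xs : forall (s : state) (k : nat),
  lreg s 0 = l -> lreg s 1 = j ->
  let r := foldl (fstep L) (s, k) xs in
  [/\ lreg r.1 0 = l, lreg r.1 1 = j,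
      breg r.1 0 = breg s 0 && all (fun x => (x <= j) ==> (x <= l)) xs
    & (r.2 <= k + 6 * size xs)%N].
Proof.
elim: xs => [|x xs IH] s k H0 H1 /=.
  by rewrite andbT addn0.
have [b [n [Hn [Hex Hb]]]] := body_spec L (State (upd (lreg s) 2 x) (breg s)).
have -> : fstep L (s, k) x = (State (upd (lreg s) 2 x) b, k + n.+1).
  by rewrite /fstep; case: s H0 H1 Hex Hb => lr br /= _ _ ->.
move: Hb; rewrite /= /upd /= H0 H1 => Hb.
have [] := IH (State (upd (lreg s) 2 x) b) (k + n.+1).
- by rewrite /= /upd /= H0.
- by rewrite /= /upd /= H1.
move=> -> -> -> Hk; split => //.
  by rewrite /= Hb andbA.
apply: (leq_trans Hk).
by rewrite mulnS; lia.

Qed.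

End Proofs.

Theorem mainTheorem16 :
  exists (P : cmd) (K : nat),
    forall (disp : Order.disp_t) (T : bJoinSemilatticeType disp)
           (L : seq T) (l : T),
      uniq L -> closure_set L l ->
      forall j : T,
        let r := exec L P (init_state l j) in
        (breg r.1 0 <-> upset l (closure_set L) j) /\
        (r.2 <= K * (size L + 1))%N.
Proof.
exists prog, 6 => disp T L l _ _ j.
change (exec L prog (init_state l j)) with
  (let (s1, k1) := (State (lreg (init_state l j))
                (upd (breg (init_state l j)) 0 (l <= j)), 1%N) in
   let (s2, k2) := foldl (fstep L) (s1, 0%N) L in (s2, (k1 + k2)%N)).
cbv zeta iota.
have [] := fold_spec L l j L (State (lreg (init_state l j))
                (upd (breg (init_state l j)) 0 (l <= j))) 0.
- by [].
- by [].
move=> _ _ Hb Hk.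
set F := foldl _ _ _ in Hb Hk *.

case: F Hb Hk => s k /= Hb Hk; split; last first.
  lia.
rewrite Hb /upd /=.
split.
- move=> /andP [lj /allP Hall]; split => // i [S' [HS ->]] Hij.
  apply/joinsP_seq => y Hy _.
  have yL := HS y Hy.
  have /implyP := Hall y yL; apply.
  exact: le_trans (joins_sup_seq (fun z : T => z) Hy isT) Hij.
- case=> lj H; rewrite lj /=; apply/allP => x xL; apply/implyP => xj.
  apply: H xj; exists [:: x]; split.
    by move=> y; rewrite inE => /eqP ->.
  by rewrite big_seq1.
Qed.
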